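(* Let $k$ be a positive integer. For any odd prime $p>k$, the rational number $P_k(1,4,0)$ satisfies $P_k(1,4,0)\not\equiv0\pmod p$ (i.e. it is a $p$-adic unit).
   Context: Define $\widetilde c_n\in\mathbb Q[\beta]$ by $\widetilde c_0=2$, $\widetilde c_1=1$, $(n+1)\widetilde c_{n+1}=\widetilde c_n+\frac\beta4(n-1)\widetilde c_{n-1}$ for $n\ge1$, and $\widetilde c_n=0$ for $n<0$. Then $P_k(1,\beta,0)$ is the $k\times k$ determinant with $(j,l)$ entry $\widetilde c_{k-2(j-1)+(l-1)}$, $1\le j,l\le k$. (These $\widetilde c_n$ are the specializations $h=1,\gamma=0$ of polynomials $c_n(h,\beta,\gamma)$ with $c_0=2$ and $\log(1+\sum_{n\ge1}c_nt^n)=\sum_{m\ge1}(-1)^{m-1}(m-1)!\mathrm{ch}_mt^m$, $\mathrm{ch}_1=h$, $\mathrm{ch}_{2n}=0$, $\mathrm{ch}_{2n-1}=\frac1{(2n-1)!}(\frac{\beta h}4-\frac{n-1}2\gamma)(\frac\beta4)^{n-2}$ for $n\ge2$, and $P_k(h,\beta,\gamma)=\det(c_{k-2(j-1)+(l-1)})$.) *)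

(* Defs.v *)
From HB Require Import structures.
From mathcomp Require Import all_boot all_order all_algebra.
Set Implicit Arguments. Unset Strict Implicit. Unset Printing Implicit Defensive.
Import Order.TTheory GRing.Theory Num.Theory.
Local Open Scope ring_scope.

(* ctil_pair beta m = (c~_m, c~_(m+1)) where c~_0 = 2, c~_1 = 1 and
   (n+1) c~_(n+1) = c~_n + (beta/4) (n-1) c~_(n-1)  for n >= 1. *)
Fixpoint ctil_pair (beta : rat) (m : nat) : rat * rat :=
  match m with
  | 0%N => (2%:R, 1)
  | m'.+1 =>
      let '(a, b) := ctil_pair beta m' in
      (b, (b + beta / 4%:R * m'%:R * a) / (m'.+2)%:R)
  end.

Definition ctil (beta : rat) (n : int) : rat :=
  match n with
  | Posz m => (ctil_pair beta m).1
  | Negz _ => 0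
  end.

(* P_k(1, beta, 0) = det (c~_(k - 2(j-1) + (l-1)))_{1 <= j,l <= k};
   with 0-based indices j, l < k the entry is c~_(k - 2 j + l). *)
Definition Pk (beta : rat) (k : nat) : rat :=
  \det (\matrix_(j < k, l < k) ctil beta (k%:Z - 2 * (j : nat)%:Z + (l : nat)%:Z)).

Definition padic_unit (p : nat) (q : rat) : bool :=
  ~~ (p %| `|numq q|)%N && ~~ (p %| `|denq q|)%N.

(* Main.v *)
Require Import Defs.
From mathcomp Require Import all_boot all_order all_algebra.
From mathcomp Require Import fingroup perm.
From mathcomp Require Import zify ring lra.
Set Implicit Arguments. Unset Strict Implicit. Unset Printing Implicit Defensive.
Import Order.TTheory GRing.Theory Num.Theory.
Local Open Scope ring_scope.
Definition P2 (x : rat) := exists (b : bool) (u v : nat), x = (-1)^+b * (2%:R^+u / 2%:R^+v).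

Lemma P2M x y : P2 x -> P2 y -> P2 (x * y).
Proof.
move=> [b1 [u1 [v1 ->]]] [b2 [u2 [v2 ->]]].
exists (b1 (+) b2), (u1 + u2)%N, (v1 + v2)%N.
rewrite !exprD signr_addb invfM; ring.
Qed.

Lemma P2_1 : P2 1.
Proof. by exists false, 0%N, 0%N; rewrite !expr0 invr1 !mulr1. Qed.

Lemma P2_sign (b : bool) : P2 ((-1)^+b).
Proof. by exists b, 0%N, 0%N; rewrite !expr0 invr1 !mulr1. Qed.

Lemma P2_2 (u : nat) : P2 (2%:R^+u).
Proof. by exists false, u, 0%N; rewrite expr0 invr1 mulr1 mul1r. Qed.

Lemma P2_V2 (u : nat) : P2 (2%:R^+u)^-1.
Proof. by exists false, 0%N, u; rewrite /= !expr0 !mul1r. Qed.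

Lemma P2_prod (I : finType) (F : I -> rat) : (forall i, P2 (F i)) -> P2 (\prod_i F i).
Proof. move=> H; apply: (big_ind P2); [exact: P2_1 | exact: P2M | move=> i _; exact: H]. Qed.

Lemma not_dvd_pow2 p w : prime p -> odd p -> ~~ (p %| 2 ^ w)%N.
Proof.
move=> pp op; rewrite Euclid_dvdX //; apply/negP => /andP [] /(dvdn_leq (isT : (0 < 2)%N)) h _.
have := prime_gt1 pp; case: p pp op h => [|[|[|p]]] //.
Qed.

Lemma P2_unit p x : prime p -> odd p -> P2 x -> padic_unit p x.
Proof.
move=> pp op [b [u [v ->]]].
have p1 : ~~ (p %| 1)%N by rewrite dvdn1; apply/eqP => h; move: pp; rewrite h.
case: (leqP v u) => h.
  have -> : (-1)^+b * (2%:R^+u / 2%:R^+v) = ((-1)^+b * 2^+(u-v) : int)%:~R :> rat.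
    rewrite rmorphM /= rmorph_sign rmorphXn /= (expfB_cond (m:=u)) //.
  rewrite /padic_unit numq_int denq_int /= p1 andbT.
  by case: b; rewrite /= ?expr1 ?expr0 ?mulN1r ?mul1r ?abszN abszX /= not_dvd_pow2.
have -> : (-1)^+b * (2%:R^+u / 2%:R^+v) = (((-1)^+b * 2^+(v-u) : int)%:~R)^-1 :> rat.
  rewrite rmorphM /= rmorph_sign rmorphXn /= invfM invr_sign.
  rewrite -[in 2%:R^+v](subnKC (ltnW h)) exprD invfM.
  rewrite [2%:R^+u * _]mulrA divff ?mul1r //; last by rewrite expf_neq0 // pnatr_eq0.
set i := ((-1)^+b * 2^+(v-u) : int).
have i0 : i != 0 by rewrite mulf_neq0 ?signr_eq0 // expf_neq0.
rewrite /padic_unit denqVz //.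
have -> : i%:~R^-1 = (1%:~R / i%:~R : rat) by rewrite mul1r.
rewrite coprimeq_num; last by rewrite coprime1n.
have e2 : (0 < 2^+(v-u) :> int) by rewrite exprn_gt0.
rewrite mulr1 /i; clear i i0; case: b; rewrite /= ?expr1 ?expr0 ?mulN1r ?mul1r ?sgrN ?normrN gtr0_sg // ?abszN ?gtr0_norm //= p1 /= abszX /=; exact: not_dvd_pow2.
Qed.
Definition a (r : nat) : rat := ('C(r.*2, r))%:R / 4%:R ^+ r.
Definition cc (n : nat) : rat := if n == 0%N then 2%:R else a n./2.

Lemma bin_key r : (r.+1 * 'C(r.*2.+2, r.+1) = 2 * (r.*2.+1 * 'C(r.*2, r)))%N.
Proof.
have h1 := mul_bin_diag r.*2.+2 r.
have h2 := mul_bin_diag r.*2.+1 r.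
have h3 : 'C(r.*2.+1, r.+1) = 'C(r.*2.+1, r).
  by rewrite -bin_sub; [congr 'C(_, _); rewrite -addnn; lia | lia].
rewrite -h1 /=; rewrite /= h3 in h2; rewrite h2; nia.
Qed.

Lemma a_rec r : (r.*2.+2)%:R * a r.+1 = (r.*2.+1)%:R * a r.
Proof.
rewrite /a doubleS.
have := congr1 (fun n : nat => n%:R : rat) (bin_key r).
rewrite !natrM => h.
have q0 : (4%:R : rat)^+r != 0 by rewrite expf_neq0 // pnatr_eq0.
have e : (r.*2.+2)%:R = 2%:R * (r.+1)%:R :> rat by rewrite -natrM; congr _%:R; lia.
have e4 : (4%:R : rat) = 2%:R * 2%:R by rewrite -natrM.
rewrite e exprS e4.
set X := ('C(_, _))%:R in h *; set Y := ('C(_, _))%:R in h *; set q := _ ^+ r in q0 *.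
rewrite -e4.
have -> : 2%:R * (r.+1)%:R * (X / (2%:R * 2%:R * q)) = (r.+1)%:R * X / (2%:R * q).
  by field; rewrite q0.
by rewrite h; field.
Qed.

Lemma cc_even r : cc (r.*2.+2) = a r.+1.
Proof. by rewrite /cc /= doubleK. Qed.
Lemma cc_odd r : cc (r.*2.+1) = a r.
Proof. by rewrite /cc /= uphalf_double. Qed.

Lemma cc_rec n : cc n.+2 = (cc n.+1 + n%:R * cc n) / (n.+2)%:R.
Proof.
have n2 : (n.+2)%:R != 0 :> rat by rewrite pnatr_eq0.
apply: (canRL (mulfK n2)).
case: n n2 => [|n] n2.
  rewrite /cc /a /= mul0r addr0 bin0 expr1 expr0 divr1.
  by rewrite (_ : 'C(1.*2, 1) = 2%N) //; field.
have := odd_double_half n; set r := n./2; generalize (odd n) => b; case: b => /= <-.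
- rewrite add1n -doubleS cc_even cc_odd -doubleS cc_even.
  have := a_rec r.+1 => h.
  by rewrite mulrC h -addn1 natrD mulrDl mul1r addrC.
- rewrite add0n cc_odd cc_even.
  have := a_rec r => h.
  rewrite -[r.*2.+3]/((r.+1).*2.+1) cc_odd -h (_ : (r.*2.+3)%:R = (r.*2.+2)%:R + 1 :> rat); [ring | by rewrite natr1].
Qed.

Lemma ctil_pair4 n : ctil_pair 4%:R n = (cc n, cc n.+1).
Proof.
elim: n => [|n IH]; first by rewrite /= /cc /a /= bin0 expr0 divr1.
rewrite /= IH; congr (_, _); rewrite cc_rec; congr ((_ + _) / _).
by rewrite divff ?pnatr_eq0 // mul1r.
Qed.

Lemma ctil_pos n : ctil 4%:R (Posz n) = cc n.
Proof. by rewrite /ctil ctil_pair4. Qed.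
Lemma sum_trunc K N (F : nat -> nat) : (K <= N)%N -> (forall s, (K <= s)%N -> F s = 0%N) ->
  (\sum_(0 <= s < N) F s = \sum_(0 <= s < K) F s)%N.
Proof.
move=> KN H; rewrite (big_cat_nat (leq0n K) KN) /= [X in (_ + X)%N]big1_seq ?addn0 //.
by move=> s /andP[_]; rewrite mem_index_iota => /andP[h _]; exact: H.
Qed.

Section Ident.
Variables (i t e : nat).
Let X := (i.*2 + e)%N.
Let Y := (t.*2 + e)%N.
Let I := (i + t + e)%N.
Let f s := ('C(X, i + e + s) * 'C(Y, t + e + s))%N.
Let g s := ('C(X, i.+1 + s) * 'C(Y, t.+1 + s))%N.

Lemma vsplit : ('C((i + t + e).*2, i + t + e) =
   \sum_(0 <= s < i.+1) f s + \sum_(0 <= s < t + e) g s)%N.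
Proof.
have -> : (i + t + e).*2 = (X + Y)%N by rewrite /X /Y -!addnn; lia.
rewrite -binomial.Vandermonde -/I -(big_mkord xpredT (fun r => 'C(X, r) * 'C(Y, I - r))%N).
rewrite (@big_cat_nat _ _ _ i.+1) /=; last (by rewrite /I; lia); last by [].
congr (_ + _)%N.
  rewrite big_nat_rev /=; apply: eq_big_nat => r /andP[_ hr].
  rewrite /f add0n -(@bin_sub X (i + e + r)); last by rewrite /X -addnn; lia.
  congr (_ * 'C(_, _))%N; [congr 'C(_, _); rewrite /X -addnn; lia | rewrite /I; lia].
rewrite -{1}[i.+1]add0n big_addn.
have -> : (I.+1 - i.+1 = t + e)%N by rewrite /I; lia.
apply: eq_big_nat => r /andP[_ hr].
rewrite /g -(@bin_sub Y (t.+1 + r)); last by rewrite /Y -addnn; lia.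
congr ('C(_, _) * 'C(_, _))%N; rewrite /X /Y /I -?addnn; lia.
Qed.
End Ident.

Definition w (e s : nat) : nat := if (e == 0%N) && (s == 0%N) then 1%N else 2%N.

Lemma ident e i t N : (e <= 1)%N -> (i < N)%N -> (t < N)%N ->
  (\sum_(0 <= s < N) w e s * ('C(i.*2 + e, i + e + s) * 'C(t.*2 + e, t + e + s)) =
   'C((i + t + e).*2, i + t + e))%N.
Proof.
move=> he hi ht; rewrite vsplit.
case: e he => [|[|//]] _.
- set f := fun s => ('C(i.*2 + 0, i + 0 + s) * 'C(t.*2 + 0, t + 0 + s))%N.
  have fi : forall s, (i.+1 <= s)%N -> f s = 0%N.
    by move=> s hs; rewrite /f bin_small ?mul0n // -addnn; lia.
  have ft : forall s, (t.+1 <= s)%N -> f s = 0%N.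
    by move=> s hs; rewrite /f [X in (_ * X)%N]bin_small ?muln0 // -addnn; lia.
  have N0 : (0 < N)%N by lia.
  rewrite (_ : \sum_(0 <= s < N) _ = f 0%N + 2 * \sum_(0 <= s < N.-1) f s.+1)%N; last first.
    rewrite big_ltn // big_add1 big_distrr /=; congr (_ + _)%N; first by rewrite /w /= mul1n.
  change (f 0%N + 2 * \sum_(0 <= s < N.-1) f s.+1 = \sum_(0 <= s < i.+1) f s + \sum_(0 <= s < t + 0) 'C(i.*2 + 0, i.+1 + s) * 'C(t.*2 + 0, t.+1 + s))%N.
  rewrite (_ : \sum_(0 <= s < i.+1) f s = f 0%N + \sum_(0 <= s < N.-1) f s.+1)%N; last first.
    rewrite big_ltn // big_add1 /=; congr (_ + _)%N; symmetry.
    by apply: sum_trunc => [|s hs]; [lia | apply: fi; lia].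
  rewrite (_ : \sum_(0 <= s < t + 0) _ = \sum_(0 <= s < N.-1) f s.+1)%N; last first.
    symmetry; rewrite (sum_trunc (K := t)); last (by move=> s hs; apply: ft; lia); last by lia.
    rewrite addn0; apply: eq_big_nat => s _; rewrite /f; congr ('C(_, _) * 'C(_, _))%N; lia.
  lia.
- set f := fun s => ('C(i.*2 + 1, i + 1 + s) * 'C(t.*2 + 1, t + 1 + s))%N.
  have fi : forall s, (i.+1 <= s)%N -> f s = 0%N.
    by move=> s hs; rewrite /f bin_small ?mul0n // -addnn; lia.
  have ft : forall s, (t.+1 <= s)%N -> f s = 0%N.
    by move=> s hs; rewrite /f [X in (_ * X)%N]bin_small ?muln0 // -addnn; lia.
  rewrite /w /=.
  rewrite (_ : \sum_(0 <= s < N) _ = 2 * \sum_(0 <= s < N) f s)%N; last by rewrite big_distrr.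
  rewrite mul2n -addnn; congr (_ + _)%N.
    by apply: sum_trunc => [|s hs]; [lia | apply: fi; lia].
  rewrite (sum_trunc (K := t.+1)); last (by move=> s hs; apply: ft; lia); last by lia.
  rewrite addn1.
  apply: eq_big_nat => s _; rewrite /f; congr ('C(_, _) * 'C(_, _))%N; lia.
Qed.

Lemma four_pow (i : nat) : (4%:R : rat) ^+ i = 2%:R ^+ (i.*2).
Proof. by rewrite -mul2n exprM -natrX. Qed.

Lemma P2_4V (i : nat) : P2 ((4%:R : rat) ^+ i)^-1.
Proof. rewrite four_pow; exact: P2_V2. Qed.

Lemma hankel e N : (e <= 1)%N -> P2 (\det (\matrix_(i < N, t < N) a (e + i + t))).
Proof.
move=> he.
set X := \matrix_(i < N, s < N) (('C(i.*2 + e, i + e + s))%:R / (4%:R : rat) ^+ i).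
set Y := \matrix_(s < N, t < N) ((w e s * 'C(t.*2 + e, t + e + s))%:R / (4%:R : rat) ^+ t / 4%:R ^+ e).
have -> : \matrix_(i < N, t < N) a (e + i + t) = X *m Y.
  apply/matrixP => i t; rewrite !mxE.
  have h := ident he (ltn_ord i) (ltn_ord t); rewrite big_mkord in h.
  rewrite (eq_bigr (fun s : 'I_N => (w e s * ('C(i.*2 + e, i + e + s) * 'C(t.*2 + e, t + e + s)))%:R
      * ((4%:R : rat) ^+ i * 4%:R ^+ t * 4%:R ^+ e)^-1)); last first.
    move=> s _; rewrite !mxE !natrM !invfM; ring.
  rewrite -big_distrl /= -natr_sum h /a.
  rewrite (_ : (e + i + t) = (i + t + e))%N; last by lia.
  by rewrite !exprD.
rewrite det_mulmx; apply: P2M.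
  rewrite det_trig; last by apply/is_trig_mxP => i s lt; rewrite mxE bin_small ?mul0r // -addnn; lia.
  apply: P2_prod => i; rewrite mxE (_ : (i + e + i) = i.*2 + e)%N; last by rewrite -addnn; lia.
  by rewrite binn mul1r; exact: P2_4V.
rewrite -det_tr det_trig; last first.
  by apply/is_trig_mxP => i s lt; rewrite !mxE bin_small ?muln0 ?mul0r // -addnn; lia.
apply: P2_prod => i; rewrite !mxE (_ : (i + e + i) = i.*2 + e)%N; last by rewrite -addnn; lia.
rewrite binn muln1 -mulrA; apply: P2M.
  by rewrite /w; case: ifP => _; [exact: (P2_2 0) | exact: (P2_2 1)].
exact: P2M (P2_4V _) (P2_4V _).
Qed.

Lemma det_colsub n (f : 'I_n -> 'I_n) (A : 'M[rat]_n) : injective f ->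
  exists b : bool, \det A = (-1)^+b * \det (\matrix_(i, j) A i (f j)).
Proof.
move=> injf; set s := perm injf.
have -> : \matrix_(i, j) A i (f j) = col_perm s A.
  by apply/matrixP => i j; rewrite !mxE permE.
rewrite col_permE det_mulmx det_perm; exists (odd_perm s^-1).
by rewrite mulrCA -signr_addb addbb mulr1.
Qed.

Lemma det_rowsub n (f : 'I_n -> 'I_n) (A : 'M[rat]_n) : injective f ->
  exists b : bool, \det A = (-1)^+b * \det (\matrix_(i, j) A (f i) j).
Proof.
move=> injf; set s := perm injf.
have -> : \matrix_(i, j) A (f i) j = row_perm s A.
  by apply/matrixP => i j; rewrite !mxE permE.
rewrite row_permE det_mulmx det_perm; exists (odd_perm s).
by rewrite mulrA -signr_addb addbb mul1r.
Qed.

Lemma P2_sign_inv (b : bool) x : P2 ((-1)^+b * x) -> P2 x.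
Proof.
move=> h; have := P2M (P2_sign b) h; by rewrite mulrA -signr_addb addbb mul1r.
Qed.

Notation c := (ctil 4%:R).

Lemma c_posn (w : nat) : (0 < w)%N -> c w%:Z = a w./2.
Proof. by rewrite ctil_pos /cc; case: w. Qed.

Lemma c_neg (z : int) : z < 0 -> c z = 0.
Proof. by case: z. Qed.

Lemma c_diff (q : int) : c (2 * q + 1) - c (2 * q) = if q == 0 then -1 else 0.
Proof.
case: q => [[|k]|k].
- by rewrite /=; lra.
- have -> : (2 * (Posz k.+1) + 1 = Posz (k.*2.+3))%R by rewrite -addnn; lia.
  have -> : (2 * (Posz k.+1) = Posz (k.*2.+2))%R by rewrite -addnn; lia.
  by rewrite !ctil_pos -[k.*2.+3]/((k.+1).*2.+1) cc_odd cc_even subrr.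
- rewrite !c_neg ?subrr //; rewrite NegzE; lia.
Qed.

Lemma half_eq w x : (w = x.*2 \/ w = x.*2.+1)%N -> w./2 = x.
Proof. by case=> ->; rewrite ?doubleK // /= uphalf_double. Qed.

Lemma main_P2 m1 m2 : (m2 <= m1)%N -> (m1 <= m2.+1)%N -> P2 (Pk 4%:R (m1 + m2)).
Proof.
move=> h1 h2.
set d := (m1 - m2)%N.
have hd : (m1 = m2 + d)%N by rewrite /d; lia.
have d1 : (d <= 1)%N by rewrite /d; lia.
rewrite /Pk.
set M := \matrix_(_, _) _.
pose Ub (y : nat) := odd (y + d) && (d < y)%N.
pose F := \matrix_(x < m1 + m2, y < m1 + m2) ((Ub y && (x.+1 == y))%:R : rat).
have detE : \det (1%:M - F) = 1.
  rewrite -det_tr det_trig; last first.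
    apply/is_trig_mxP => i j lt; rewrite !mxE.
    rewrite (_ : (j == i) = false); last by apply/negbTE; rewrite neq_ltn lt orbT.
    rewrite (_ : (j.+1 == i) = false) ?andbF ?subrr //; apply/negbTE; rewrite neq_ltn; lia.
  by rewrite big1 // => i _; rewrite !mxE eqxx (_ : (i.+1 == i) = false) ?andbF ?subr0 //; lia.
have NE : forall j (y : 'I_(m1 + m2)), (M *m (1%:M - F)) j y =
    M j y - (if Ub y then c ((m1 + m2)%:Z - 2 * (j : nat)%:Z + (y.-1)%:Z) else 0).
  move=> j y; rewrite mulmxBr mulmx1 [in LHS]mxE [(- (M *m F)) j y]mxE; congr (_ - _).
  rewrite !mxE; case: ifP => U.
    have yp : (y.-1 < m1 + m2)%N by have := ltn_ord y; lia.
    have y0 : (0 < y)%N by move: U => /andP[_]; lia.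
    rewrite (bigD1 (Ordinal yp)) //= big1 ?addr0.
      by rewrite !mxE U /= prednK // eqxx mulr1.
    move=> x /negbTE hx; rewrite !mxE U /=.
    case: eqP => [hxy|]; last by rewrite mulr0.
    by move: hx; rewrite -val_eqE /= -hxy eqxx.
  by rewrite big1 // => x _; rewrite !mxE U /= mulr0.
pose gf (t : nat) := if (t < m1)%N then (t.*2 - d)%N else ((t - m1).*2 + d.+1)%N.
have glt : forall t : 'I_(m1 + m2), (gf t < m1 + m2)%N.
  by move=> t; have := ltn_ord t; rewrite /gf; case: ifP; lia.
pose g (t : 'I_(m1 + m2)) := Ordinal (glt t).
have ginj : injective g.
  move=> t1 t2 /(congr1 val) /=; rewrite /gf => h; apply: val_inj => /=.
  by move: h; case: ifP; case: ifP; lia.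
have [b1 eb1] := det_colsub (M *m (1%:M - F)) ginj.
rewrite -[\det M]mulr1 -detE -det_mulmx eb1.
apply: P2M; first exact: P2_sign.
set Q := \matrix_(i, j) _.
have QB : Q = block_mx (\matrix_(j < m1, t < m1) a (m2 - j + t)) 0 (dlsubmx Q) ((-1)%:M).
  have QE : forall i j, Q i j = (M *m (1%:M - F)) i (g j) by move=> i j; rewrite mxE.
  have NE' : forall i j, Q i j = M i (g j) - (if Ub (g j) then c ((m1 + m2)%:Z - 2 * (i : nat)%:Z + ((g j).-1)%:Z) else 0).
    by move=> i j; rewrite QE NE.
  clearbody Q; clear QE NE.
  have ME : forall i (j : 'I_(m1 + m2)), M i j = c ((m1 + m2)%:Z - 2 * (i : nat)%:Z + (j : nat)%:Z) by move=> i j; rewrite mxE.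
  clearbody M.
  rewrite -{1}[Q]submxK; congr block_mx; apply/matrixP => i j; rewrite !mxE NE' ME /=.
  - rewrite /gf ltn_ord.
    have -> : Ub (j.*2 - d)%N = false.
      rewrite /Ub; case: (posnP j) => [->|jp]; first by rewrite /= andbF.
      by rewrite (_ : (j.*2 - d + d = j.*2)%N) ?odd_double //; lia.
    rewrite subr0.
    have ip := ltn_ord i; have jp := ltn_ord j.
    rewrite (_ : (m1 + m2)%N%:Z - 2 * (i : nat)%:Z + (j.*2 - d)%N%:Z = ((m1 + m2 + (j.*2 - d)) - i.*2)%N%:Z); last by lia.
    rewrite c_posn; last by lia.
    by congr a; apply: half_eq; lia.
  - have ip := ltn_ord i; have jp := ltn_ord j.
    rewrite /gf (_ : (m1 + j < m1)%N = false); last by lia.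
    rewrite (_ : (m1 + j - m1 = j)%N); last by lia.
    have -> : Ub (j.*2 + d.+1)%N.
      rewrite /Ub (_ : (j.*2 + d.+1 + d = (j + d).*2.+1)%N); last by lia.
      by rewrite /= odd_double /=; lia.
    set q : int := (m1%:Z - (i : nat)%:Z + (j : nat)%:Z).
    rewrite (_ : (m1 + m2)%N%:Z - 2 * (i : nat)%:Z + (j.*2 + d.+1)%N%:Z = 2 * q + 1); last by rewrite /q; lia.
    rewrite (_ : (m1 + m2)%N%:Z - 2 * (i : nat)%:Z + (j.*2 + d.+1).-1%:Z = 2 * q); last by rewrite /q; lia.
    rewrite c_diff (_ : (q == 0) = false) //; apply/negbTE; rewrite /q; lia.
  - have ip := ltn_ord i; have jp := ltn_ord j.
    rewrite /gf (_ : (m1 + j < m1)%N = false); last by lia.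
    rewrite (_ : (m1 + j - m1 = j)%N); last by lia.
    have -> : Ub (j.*2 + d.+1)%N.
      rewrite /Ub (_ : (j.*2 + d.+1 + d = (j + d).*2.+1)%N); last by lia.
      by rewrite /= odd_double /=; lia.
    set q : int := ((j : nat)%:Z - (i : nat)%:Z).
    rewrite (_ : (m1 + m2)%N%:Z - 2 * (m1 + i)%N%:Z + (j.*2 + d.+1)%N%:Z = 2 * q + 1); last by rewrite /q; lia.
    rewrite (_ : (m1 + m2)%N%:Z - 2 * (m1 + i)%N%:Z + (j.*2 + d.+1).-1%:Z = 2 * q); last by rewrite /q; lia.
    rewrite c_diff (_ : (q == 0) = (i == j)); last first.
      rewrite /q; apply/eqP/eqP => [h|->]; [apply: val_inj => /=; lia | by rewrite subrr].
    by case: (i == j).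
have [b2 eb2] := det_rowsub (\matrix_(j < m1, t < m1) a (m2 - j + t)) (@rev_ord_inj m1).
rewrite QB det_lblock det_scalar; apply: P2M; last first.
  by rewrite -signr_odd; exact: P2_sign.
rewrite eb2; apply: P2M; first exact: P2_sign.
have -> : \matrix_(i, j) (\matrix_(j0 < m1, t < m1) a (m2 - j0 + t)) (rev_ord i) j
   = \matrix_(i < m1, j < m1) a ((m2.+1 - m1) + i + j).
  apply/matrixP => i j; rewrite !mxE /=; congr a.
  have := ltn_ord i; lia.
apply: hankel; lia.
Qed.


Theorem lemma4p5 (k p : nat) :
  (0 < k)%N -> prime p -> odd p -> (k < p)%N ->
  padic_unit p (Pk 4%:R k).
Proof.
move=> _ pp op _.
have e : (uphalf k + k./2 = k)%N.
  by have := odd_double_half k; rewrite uphalf_half -addnn; lia.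
have h1 : (k./2 <= uphalf k)%N by rewrite uphalf_half leq_addl.
have h2 : (uphalf k <= (k./2).+1)%N by rewrite uphalf_half; case: (odd k).
have := main_P2 h1 h2; rewrite e => h.
exact: P2_unit pp op h.
Qed.
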